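(* Let $k \in \mathbb{N}$. Every linear $k$-DCFG $G$ is equivalent to (i.e. generates the same language as) some $k$-DCFG $G'=\langle N, \Sigma, P, S\rangle$ all of whose rules have one of the following forms, where $A, B \in N$ and $u \in \Theta$: (1) $A \to u\cdot B$ or $A \to B \cdot u$, with $|u| \leq 1$ and $u \neq \epsilon$; (2) $A \to B \odot_j u$, with $|u| \leq 1$; (3) $A \to u$, with $|u| = 1$; (4) $S \to \epsilon$ (where $S$ is the start symbol).
   Context: Fix a finite alphabet $\Sigma$; $\Sigma^*$ is the set of words over $\Sigma$ and $\epsilon$ the empty word. $\Theta_k$ is the set of tuples $(u_0,\ldots,u_k)$ with $u_i\in\Sigma^*$, and $\Theta=\bigcup_{k\in\mathbb{N}}\Theta_k$; the rank of $(u_0,\ldots,u_k)$ is $k$, and its length $|u|$ is the sum of the lengths of its components. Rank-$0$ tuples are identified with words; in particular $\epsilon$ also denotes the rank-$0$ tuple $(\epsilon)$. Concatenation $\cdot:\Theta_i\times\Theta_j\to\Theta_{i+j}$ is $(x_0,\ldots,x_i)\cdot(y_0,\ldots,y_j)=(x_0,\ldots,x_{i-1},x_iy_0,y_1,\ldots,y_j)$, and for $1\le l\le i$ intercalation $\odot_l:\Theta_i\times\Theta_j\to\Theta_{i+j-1}$ is $(x_0,\ldots,x_i)\odot_l(y_0,\ldots,y_j)=(x_0,\ldots,x_{l-2},x_{l-1}y_0,y_1,\ldots,y_{j-1},y_jx_l,x_{l+1},\ldots,x_i)$. Let $N$ be a finite set of nonterminals disjoint from $\Sigma$ with a rank function $\mathrm{rk}:N\to\mathbb{N}$.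 The set of $k$-correct terms $\mathrm{Tm}_k(N,\Sigma)$ and their ranks are defined inductively: every tuple in $\Theta_j$ with $j\le k$ is a term of rank $j$, and every nonterminal $A$ with $\mathrm{rk}(A)\le k$ is a term of rank $\mathrm{rk}(A)$; if $\alpha,\beta$ are terms with $\mathrm{rk}\,\alpha+\mathrm{rk}\,\beta\le k$ then $(\alpha\cdot\beta)$ is a term of rank $\mathrm{rk}\,\alpha+\mathrm{rk}\,\beta$; if $1\le j\le k$, $\mathrm{rk}\,\alpha\ge j$ and $\mathrm{rk}\,\alpha+\mathrm{rk}\,\beta\le k+1$ then $(\alpha\odot_j\beta)$ is a term of rank $\mathrm{rk}\,\alpha+\mathrm{rk}\,\beta-1$. A ground term is one containing no nonterminals; its value $\nu(\alpha)\in\Theta$ is obtained by interpreting $\cdot$ and $\odot_j$ as the operations above. A context $C[x]$ is a term with one leaf occurrence of a variable $x$ of some rank; $C[\beta]$ is the result of substituting a term $\beta$ of the same rank for $x$. A $k$-displacement context-free grammar ($k$-DCFG) is $G=\langle N,\Sigma,P,S\rangle$ where $S\in N$ has rank $0$ and $P$ is a finite set of rules $A\to\alpha$ with $A\in N$, $\alpha\in\mathrm{Tm}_k(N,\Sigma)$ and $\mathrm{rk}(A)=\mathrm{rk}(\alpha)$. Standing assumption: all tuples occurring as leaves of right-hand sides of rules have length at most $1$. Derivability $\vdash_G$ is the smallest reflexive transitive relation between nonterminals and terms such that $(B\to\beta)\in P$ and $A\vdash_G C[B]$ imply $A\vdash_G C[\beta]$ for any context $C$. $L_G(A)=\{\nu(\alpha)\mid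 A\vdash_G\alpha,\ \alpha \text{ ground}\}$ and $L(G)=L_G(S)$. Two grammars are equivalent if they generate the same language. A term is linear if it contains at most one occurrence of a nonterminal; a grammar is linear if the right-hand sides of all its rules are linear. All right-hand sides in the claim are required to be $k$-correct terms of the same rank as the left-hand side. *)

(* Defs.v *)
From Stdlib Require List.
From mathcomp Require Import all_boot.
Set Implicit Arguments. Unset Strict Implicit. Unset Printing Implicit Defensive.

Section DCFG.
Variable Sigma : finType.

(* A tuple (u_0, ..., u_k) in Theta is represented by the pair (u_0, [u_1;...;u_k]);
   this enforces that a tuple has at least one component. *)
Definition tup := (seq Sigma * seq (seq Sigma))%type.
Definition comps (x : tup) : seq (seq Sigma) := x.1 :: x.2.
Definition trank (x : tup) : nat := size x.2.
Definition tlen (x : tup) : nat := sumn (map size (comps x)).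
Definition teps : tup := ([::], [::]).
Definition mk_tup (l : seq (seq Sigma)) : tup := (head [::] l, behead l).

(* concatenation: (x_0..x_i).(y_0..y_j) = (x_0..x_{i-1}, x_i y_0, y_1..y_j) *)
Definition tcat (x y : tup) : tup :=
  mk_tup (belast x.1 x.2 ++ (last x.1 x.2 ++ y.1) :: y.2).

(* intercalation, for 1 <= l <= rank x:
   x (.)_l y = (x_0..x_{l-1}) . y . (x_l..x_i)
             = (x_0..x_{l-2}, x_{l-1} y_0, y_1..y_{j-1}, y_j x_l, x_{l+1}..x_i) *)
Definition todot (l : nat) (x y : tup) : tup :=
  tcat (tcat (mk_tup (take l (comps x))) y) (mk_tup (drop l (comps x))).

Variable N : Type.
Variable rk : N -> nat.

Inductive term : Type :=
| TTup : tup -> term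
| TNt : N -> term
| TCat : term -> term -> term
| TOdot : nat -> term -> term -> term.

Fixpoint trk (t : term) : nat :=
  match t with
  | TTup u => trank u
  | TNt A => rk A
  | TCat a b => trk a + trk b
  | TOdot _ a b => (trk a + trk b).-1
  end.

Fixpoint correct (k : nat) (t : term) : bool :=
  match t with
  | TTup u => trank u <= k
  | TNt A => rk A <= k
  | TCat a b => [&& correct k a, correct k b & trk a + trk b <= k]
  | TOdot j a b => [&& correct k a, correct k b, 1 <= j <= k, j <= trk a
                     & trk a + trk b <= k.+1]
  end.

Fixpoint nnt (t : term) : nat :=
  match t with
  | TTup _ => 0
  | TNt _ => 1
  | TCat a b | TOdot _ a b => nnt a + nnt b
  end.

Definition ground (t : term) : bool := nnt t == 0.

Fixpoint leaves_short (t : term) : bool :=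
  match t with
  | TTup u => tlen u <= 1
  | TNt _ => true
  | TCat a b | TOdot _ a b => leaves_short a && leaves_short b
  end.

(* value of a term (meaningful on ground terms; nonterminals are sent to epsilon) *)
Fixpoint nu (t : term) : tup :=
  match t with
  | TTup u => u
  | TNt _ => teps
  | TCat a b => tcat (nu a) (nu b)
  | TOdot j a b => todot j (nu a) (nu b)
  end.

(* subst1 B beta t t' : t = C[B] and t' = C[beta] for some context C
   (one leaf occurrence of B replaced by beta) *)
Inductive subst1 (B : N) (beta : term) : term -> term -> Prop :=
| S1_here : subst1 B beta (TNt B) beta
| S1_catl a a' b : subst1 B beta a a' -> subst1 B beta (TCat a b) (TCat a' b)
| S1_catr a b b' : subst1 B beta b b' -> subst1 B beta (TCat a b) (TCat a b')
| S1_odotl j a a' b : subst1 B beta a a' -> subst1 B beta (TOdot j a b) (TOdot j a' b)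
| S1_odotr j a b b' : subst1 B beta b b' -> subst1 B beta (TOdot j a b) (TOdot j a b').

End DCFG.

Arguments TTup {Sigma N}.
Arguments TNt {Sigma N}.
Arguments TCat {Sigma N}.
Arguments TOdot {Sigma N}.
Arguments teps {Sigma}.

Record grammar (Sigma : finType) := Grammar {
  nt : finType;
  rk : nt -> nat;
  rules : seq (nt * term Sigma nt);
  start : nt
}.
Arguments nt {Sigma}.
Arguments rk {Sigma}.
Arguments rules {Sigma}.
Arguments start {Sigma}.

(* G is a k-DCFG: S has rank 0, every rule A -> alpha has alpha k-correct with
   rk A = rk alpha, and (standing assumption) all leaf tuples of right-hand
   sides have length at most 1. *)
Definition is_kdcfg (Sigma : finType) (k : nat) (G : grammar Sigma) : Prop :=
  rk G (start G) = 0 /\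
  forall A alpha, List.In (A, alpha) (rules G) ->
    [/\ correct (rk G) k alpha, rk G A = trk (rk G) alpha & leaves_short alpha].

Definition linear_grammar (Sigma : finType) (G : grammar Sigma) : Prop :=
  forall A alpha, List.In (A, alpha) (rules G) -> nnt alpha <= 1.

Inductive derives (Sigma : finType) (G : grammar Sigma) (A : nt G) :
    term Sigma (nt G) -> Prop :=
| Der_refl : @derives Sigma G A (TNt A)
| Der_step B beta t t' : List.In (B, beta) (rules G) -> @derives Sigma G A t ->
    subst1 B beta t t' -> @derives Sigma G A t'.

Definition langA (Sigma : finType) (G : grammar Sigma) (A : nt G) (w : tup Sigma) : Prop :=
  exists alpha, @derives Sigma G A alpha /\ ground alpha /\ nu alpha = w.
Definition lang (Sigma : finType) (G : grammar Sigma) (w : tup Sigma) : Prop :=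
  @langA Sigma G (start G) w.

Definition normal_rule (Sigma : finType) (G : grammar Sigma)
    (A : nt G) (alpha : term Sigma (nt G)) : Prop :=
  (exists (u : tup Sigma) (B : nt G),
      (alpha = TCat (TTup u) (TNt B) \/ alpha = TCat (TNt B) (TTup u))
      /\ tlen u <= 1 /\ u <> teps)
  \/ (exists (B : nt G) (j : nat) (u : tup Sigma),
      alpha = TOdot j (TNt B) (TTup u) /\ tlen u <= 1)
  \/ (exists u : tup Sigma, alpha = TTup u /\ tlen u = 1)
  \/ (A = start G /\ alpha = TTup teps).

Arguments is_kdcfg {Sigma} k G.
Arguments linear_grammar {Sigma} G.
Arguments derives {Sigma} G A _.
Arguments langA {Sigma} G A w.
Arguments lang {Sigma} G w.
Arguments normal_rule {Sigma} G A alpha.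

(* Main.v *)
Require Import Defs.
From Stdlib Require List.
From Stdlib Require Import ClassicalEpsilon.
From mathcomp Require Import all_boot.
From mathcomp Require Import zify.
Set Implicit Arguments. Unset Strict Implicit. Unset Printing Implicit Defensive.


Section Words.
Variable Sigma : finType.
Notation word := (seq (option Sigma)).
Notation tup := (tup Sigma).

Definition sep (cs : seq (seq Sigma)) : word :=
  flatten (map (fun d => None :: map Some d) cs).
Definition enc (x : tup) : word := map Some x.1 ++ sep x.2.
Definition encl (l : seq (seq Sigma)) : word :=
  if l is c :: cs then map Some c ++ sep cs else [::].

Definition dec (w : word) : seq (seq Sigma) :=
  foldr (fun o acc => match o with
                      | Some a => (a :: head [::] acc) :: behead acc
                      | None => [::] :: acc end) [:: [::]] w.
Definition tw (w : word) : tup := mk_tup (dec w).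

Definition nn (w : word) := count (fun o : option Sigma => o == None) w.
Definition ns (w : word) := count (fun o : option Sigma => o != None) w.

Lemma sep_cons d ds : sep (d :: ds) = None :: encl (d :: ds).
Proof. by []. Qed.

Lemma enc_mk l : enc (mk_tup l) = encl l.
Proof. by case: l. Qed.

Lemma enc_encl x : enc x = encl (comps x).
Proof. by []. Qed.

Lemma dec_nonnil w : exists c cs, dec w = c :: cs.
Proof.
elim: w => [|[a|] w [c [cs IH]]] /=; first by exists [::], [::].
  by rewrite IH; exists (a :: c), cs.
by rewrite IH; exists [::], (c :: cs).
Qed.

Lemma encl_dec w : encl (dec w) = w.
Proof.
elim: w => [|[a|] w IH] //=; have [c [cs E]] := dec_nonnil w; rewrite E in IH *.
  by rewrite /= -IH.
by rewrite /= -IH.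
Qed.

Lemma enc_tw w : enc (tw w) = w.
Proof. by rewrite /tw enc_mk encl_dec. Qed.

Lemma dec_mapSome c w :
  dec (map Some c ++ w) = (c ++ head [::] (dec w)) :: behead (dec w).
Proof.
elim: c => [|a c IH] /=; first by have [c [cs ->]] := dec_nonnil w.
by rewrite IH.
Qed.

Lemma dec_sep cs : dec (sep cs) = [::] :: cs.
Proof.
elim: cs => [|d ds IH] //=.
by rewrite dec_mapSome IH /= cats0.
Qed.

Lemma tw_enc x : tw (enc x) = x.
Proof.
case: x => c cs; rewrite /tw /enc /= dec_mapSome dec_sep /= cats0 //.
Qed.

Lemma enc_inj x y : enc x = enc y -> x = y.
Proof. by move=> E; rewrite -(tw_enc x) E tw_enc. Qed.

Lemma nn_mapSome c : nn (map Some c) = 0.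
Proof. by elim: c. Qed.
Lemma ns_mapSome c : ns (map Some c) = size c.
Proof. by elim: c => //= a c ->. Qed.
Lemma nn_cat u v : nn (u ++ v) = nn u + nn v.
Proof. by rewrite /nn count_cat. Qed.
Lemma ns_cat u v : ns (u ++ v) = ns u + ns v.
Proof. by rewrite /ns count_cat. Qed.

Lemma nn_sep cs : nn (sep cs) = size cs.
Proof. elim: cs => //= d ds IH; by rewrite nn_cat nn_mapSome IH. Qed.
Lemma ns_sep cs : ns (sep cs) = sumn (map size cs).
Proof. elim: cs => //= d ds IH; by rewrite ns_cat ns_mapSome IH. Qed.

Lemma trankE x : trank x = nn (enc x).
Proof. by rewrite /enc nn_cat nn_mapSome nn_sep. Qed.
Lemma tlenE x : tlen x = ns (enc x).
Proof. by rewrite /enc ns_cat ns_mapSome ns_sep. Qed.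

Lemma encl_belast a l b ys :
  encl (belast a l ++ (last a l ++ b) :: ys) = encl (a :: l) ++ encl (b :: ys).
Proof.
elim: l a => [|c l IH] a.
  by rewrite /= map_cat /sep /= cats0 catA.
rewrite [belast _ _]/= [last _ _]/= [_ ++ _]/=.
have -> : encl (a :: (belast c l ++ (last c l ++ b) :: ys)) =
   map Some a ++ None :: encl (belast c l ++ (last c l ++ b) :: ys).
  by case: l IH => [|c' l'] IH.
rewrite IH /= -!catA /=; reflexivity.
Qed.

Lemma enc_tcat x y : enc (tcat x y) = enc x ++ enc y.
Proof. by rewrite /tcat enc_mk encl_belast. Qed.

Fixpoint cut (j : nat) (w : word) : word * word :=
  match w with
  | [::] => ([::], [::])
  | o :: w' => if o is None then
                 (if j == 1 then ([::], w') else let: (P, Q) := cut j.-1 w' in (None :: P, Q))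
               else let: (P, Q) := cut j w' in (o :: P, Q)
  end.
Definition repl j w v := let: (P, Q) := cut j w in P ++ v ++ Q.

Lemma cutP j w : 1 <= j <= nn w ->
  w = (cut j w).1 ++ None :: (cut j w).2 /\ nn (cut j w).1 = j.-1.
Proof.
elim: w j => [|[a|] w IH] j //=; first by case: j.
  move=> H; have := IH j H; case: (cut j w) => P S /= [E1 E2]; by rewrite E1.
rewrite add1n => /andP [j1 jw].
case: eqP => [->|jn1] //=.
have j2 : 1 <= j.-1 <= nn w by destruct j as [|[|j]] => //.
have := IH _ j2; case: (cut j.-1 w) => P S /= [E1 E2]; rewrite {1}E1; split => //.
by rewrite E2; destruct j as [|[|j]].
Qed.

Lemma cut_uniq j P S : nn P = j.-1 -> 1 <= j -> cut j (P ++ None :: S) = (P, S).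
Proof.
elim: P j => [|[a|] P IH] j /=.
- by case: j => [|[|j]].
- by rewrite add0n => E J; rewrite IH.
- rewrite add1n => E J; have J2 : j != 1 by destruct j as [|[|j]].
  rewrite (negPf J2) IH //; [by rewrite -E | by destruct j as [|[|j]]].
Qed.

Lemma repl_eq j P S v : nn P = j.-1 -> 1 <= j -> repl j (P ++ None :: S) v = P ++ v ++ S.
Proof. by move=> E J; rewrite /repl cut_uniq. Qed.

Lemma sep_encl cs : cs != [::] -> sep cs = None :: encl cs.
Proof. by case: cs. Qed.

Lemma nn_encl l : nn (encl l) = (size l).-1.
Proof. by case: l => //= c cs; rewrite nn_cat nn_mapSome nn_sep. Qed.

Lemma encl_take_drop l c : 1 <= l < size c ->
  encl c = encl (take l c) ++ None :: encl (drop l c).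
Proof.
elim: c l => [|c0 cs IH] l H; first by rewrite ltn0 andbF in H.
case: cs IH H => [|c1 cs] IH H; first by case: l H => [|[|l]].
case: l H => [|[|l]] //= H.
  by rewrite cats0.
have H1 : 1 <= l.+1 < size (c1 :: cs) by [].
rewrite !sep_cons (IH _ H1) [drop _ _]/= [take _ _]/= -!catA cat_cons [encl (c1 :: _)]/= -!catA; reflexivity.
Qed.

Lemma enc_todot l x y : 1 <= l <= trank x ->
  enc (todot l x y) = repl l (enc x) (enc y).
Proof.
move=> H.
have H2 : 1 <= l < size (comps x) by rewrite /comps /= ltnS.
have J : 1 <= l by case/andP: H.
rewrite /todot !enc_tcat !enc_mk (enc_encl x) (encl_take_drop H2).
rewrite repl_eq //; first by rewrite catA.
rewrite nn_encl size_take; case: ifP => //.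
by rewrite /comps /= ltnS; case/andP: H => _ ->.
Qed.

End Words.

Section Words2.
Variable Sigma : finType.
Notation tup := (tup Sigma).
Notation word := (seq (option Sigma)).

Lemma nn_repl j (w v : word) : 1 <= j <= nn w -> nn (repl j w v) = (nn w).-1 + nn v.
Proof.
move=> H; have [E1 E2] := cutP H; rewrite /repl; case: (cut j w) E1 E2 => P Q /= E1 E2.
rewrite E1 !nn_cat /= add1n; lia.
Qed.

Lemma ns_repl j (w v : word) : 1 <= j <= nn w -> ns (repl j w v) = ns w + ns v.
Proof.
move=> H; have [E1 E2] := cutP H; rewrite /repl; case: (cut j w) E1 E2 => P Q /= E1 E2.
rewrite E1 !ns_cat /= add0n; lia.
Qed.

Lemma trank_tcat (x y : tup) : trank (tcat x y) = trank x + trank y.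
Proof. by rewrite !trankE enc_tcat nn_cat. Qed.
Lemma tlen_tcat (x y : tup) : tlen (tcat x y) = tlen x + tlen y.
Proof. by rewrite !tlenE enc_tcat ns_cat. Qed.
Lemma trank_todot j (x y : tup) : 1 <= j <= trank x ->
  trank (todot j x y) = (trank x).-1 + trank y.
Proof. by move=> H; rewrite !trankE enc_todot // nn_repl // -trankE. Qed.
Lemma tlen_todot j (x y : tup) : 1 <= j <= trank x ->
  tlen (todot j x y) = tlen x + tlen y.
Proof. by move=> H; rewrite !tlenE enc_todot // ns_repl // -trankE. Qed.

Definition eps (r : nat) : tup := ([::], nseq r [::]).
Lemma trank_eps r : trank (eps r) = r.
Proof. by rewrite /trank size_nseq. Qed.
Lemma tlen_eps r : tlen (eps r) = 0.
Proof. by rewrite /tlen /comps /=; elim: r. Qed.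
Lemma tlen0_eps (x : tup) : tlen x = 0 -> x = eps (trank x).
Proof.
case: x => [c cs]; rewrite /tlen /comps /= /eps /trank /=.
move/eqP; rewrite addn_eq0 size_eq0 => /andP [/eqP -> H]; congr (_, _).
elim: cs H => //= d ds IH; rewrite addn_eq0 size_eq0 => /andP [/eqP -> H].
by rewrite {1}(IH H).
Qed.

End Words2.


Section Sem.
Variable Sigma : finType.
Notation tup := (tup Sigma).

Fixpoint nuv (N : Type) (v : N -> tup) (t : term Sigma N) : tup :=
  match t with
  | TTup u => u
  | TNt A => v A
  | TCat a b => tcat (nuv v a) (nuv v b)
  | TOdot j a b => todot j (nuv v a) (nuv v b)
  end.

Fixpoint occ (N : Type) (B : N) (t : term Sigma N) : Prop :=
  match t with
  | TTup _ => False
  | TNt A => A = B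
  | TCat a b | TOdot _ a b => occ B a \/ occ B b
  end.

Section N.
Variable N : Type.
Implicit Types (t a b beta : term Sigma N) (v w : N -> tup).

Lemma nuv_ground v t : nnt t = 0 -> nuv v t = nu t.
Proof.
elim: t => //= [a IHa b IHb|j a IHa b IHb] /eqP; rewrite addn_eq0 => /andP [/eqP A /eqP B];
  by rewrite IHa // IHb.
Qed.

Lemma occ_nnt B t : occ B t -> 0 < nnt t.
Proof.
elim: t => //= [a IHa b IHb|j a IHa b IHb] [H|H].
all: try (have := IHa H); try (have := IHb H); lia.
Qed.

Lemma occ_uniq B C t : nnt t = 1 -> occ B t -> occ C t -> B = C.
Proof.
elim: t => //= [A _ <- <- //|a IHa b IHb|j a IHa b IHb] E [H|H] [H'|H'];
  have h1 := occ_nnt H; have h2 := occ_nnt H';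
  try (apply: IHa => //; lia); try (apply: IHb => //; lia); lia.
Qed.

Lemma nuv_ext v w t : (forall B, occ B t -> v B = w B) -> nuv v t = nuv w t.
Proof.
elim: t => //= [A H|a IHa b IHb H|j a IHa b IHb H]; first exact: H.
  by rewrite IHa ?IHb // => B HB; apply: H; [right|left].
by rewrite IHa ?IHb // => B HB; apply: H; [right|left].
Qed.

Lemma subst_nnt B beta t t' : subst1 B beta t t' -> nnt t' + 1 = nnt t + nnt beta.
Proof.
elim => //= [|a a' b _ IH|a b b' _ IH|j a a' b _ IH|j a b b' _ IH];
  try by rewrite addnC.
all: lia.
Qed.

Lemma subst_occB B beta t t' : subst1 B beta t t' -> occ B t.
Proof. by elim => //= *; tauto. Qed.

Lemma subst_occ_beta B beta t t' C : subst1 B beta t t' -> occ C beta -> occ C t'.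
Proof. by elim => //= *; tauto. Qed.

Lemma subst_nuv B beta t t' v : subst1 B beta t t' -> nnt t = 1 ->
  nuv v t' = nuv (fun _ => nuv v beta) t.
Proof.
elim => //= [a a' b S IH|a b b' S IH|j a a' b S IH|j a b b' S IH] E;
  have h := occ_nnt (subst_occB S); rewrite IH; try lia.
- by rewrite !(@nuv_ground _ b) //; lia.
- by rewrite !(@nuv_ground _ a) //; lia.
- by rewrite !(@nuv_ground _ b) //; lia.
- by rewrite !(@nuv_ground _ a) //; lia.
Qed.

Lemma subst_exists B beta t : occ B t -> exists t', subst1 B beta t t'.
Proof.
elim: t => //= [A ->|a IHa b IHb|j a IHa b IHb]; first by exists beta; constructor.
- by case=> [/IHa [a' H]|/IHb [b' H]]; [exists (TCat a' b)|exists (TCat a b')]; constructor.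
- by case=> [/IHa [a' H]|/IHb [b' H]]; [exists (TOdot j a' b)|exists (TOdot j a b')]; constructor.
Qed.

Lemma subst_refl B t s : subst1 B (TNt B) t s -> s = t.
Proof. by elim => // *; subst. Qed.

Lemma subst_comp B X t t' t0 s' gamma :
  subst1 B t' t0 s' -> subst1 X gamma t t' ->
  exists s, subst1 B t t0 s /\ subst1 X gamma s s'.
Proof.
elim => [|a a' b _ IH|a b b' _ IH|j a a' b _ IH|j a b b' _ IH] H.
- by exists t; split => //; constructor.
all: have [s [H1 H2]] := IH H.
- by exists (TCat s b); split; constructor.
- by exists (TCat a s); split; constructor.
- by exists (TOdot j s b); split; constructor.
- by exists (TOdot j a s); split; constructor.
Qed.

End N.

Section Gram.
Variable G : grammar Sigma.
Notation NT := (nt G).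

Inductive Lsem : NT -> tup -> Prop :=
| Ls_ground A alpha : List.In (A, alpha) (rules G) -> nnt alpha = 0 -> Lsem A (nu alpha)
| Ls_step A alpha B x : List.In (A, alpha) (rules G) -> nnt alpha = 1 -> occ B alpha ->
    Lsem B x -> Lsem A (nuv (fun _ => x) alpha).

Lemma derives_lift B beta : derives G B beta ->
  forall A t0 s, derives G A t0 -> subst1 B beta t0 s -> derives G A s.
Proof.
elim => [|X gamma t t' Hin Hd IH Hs] A t0 s H0 H1.
  by rewrite (subst_refl H1).
have [s0 [H2 H3]] := subst_comp H1 Hs.
exact: (Der_step Hin (IH _ _ _ H0 H2) H3).
Qed.

Lemma Lsem_langA A x : Lsem A x -> langA G A x.
Proof.
elim => [{}A alpha Hin E|{}A alpha B {}x Hin E Ho _ [beta [Hd [Hg Hv]]]].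
  exists alpha; split; last by split => //; apply/eqP.
  apply: (Der_step Hin (Der_refl _)); constructor.
have [t' Hs] := subst_exists beta Ho.
have D1 : derives G A alpha by apply: (Der_step Hin (Der_refl _)); constructor.
exists t'; split; first exact: derives_lift Hd _ _ _ D1 Hs.
have := subst_nnt Hs; move/eqP: Hg => Hg.
rewrite Hg E => Et'.
split; first by apply/eqP; lia.
rewrite -(@nuv_ground _ (fun _ => teps) t'); last lia.
rewrite (subst_nuv _ Hs E) -Hv (@nuv_ground _ _ beta) //.
Qed.

Hypothesis lin : linear_grammar G.

Lemma derives_Lsem A t : derives G A t -> nnt t <= 1 /\
  forall v, (forall B, occ B t -> Lsem B (v B)) -> Lsem A (nuv v t).
Proof.
elim => [|X gamma t0 t' Hin Hd [IH1 IH2] Hs].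
  by split => // v H; apply: H.
have Hn := subst_nnt Hs; have Hg := lin Hin; have Ho := occ_nnt (subst_occB Hs).
split; first lia.
move=> v Hv.
have E1 : nnt t0 = 1 by lia.
rewrite (subst_nuv _ Hs E1).
apply: IH2 => B HB.
have -> : B = X by apply: (occ_uniq E1 HB (subst_occB Hs)).
case: (posnP (nnt gamma)) => Eg.
  by rewrite nuv_ground //; apply: Ls_ground.
have [C HC] : exists C, occ C gamma.
  elim: (gamma) Eg => //= [A0 _|a IHa b IHb|j a IHa b IHb].
    by exists A0.
  case: (posnP (nnt a)) => Ea.
    by rewrite Ea add0n => /IHb [C HC]; exists C; right.
  by move=> _; have [C HC] := IHa Ea; exists C; left.
  case: (posnP (nnt a)) => Ea.
    by rewrite Ea add0n => /IHb [C HC]; exists C; right.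
  by move=> _; have [C HC] := IHa Ea; exists C; left.
have Eg1 : nnt gamma = 1 by lia.
have Ee : nuv v gamma = nuv (fun _ => v C) gamma.
  apply: nuv_ext => B' HB'; by rewrite (occ_uniq Eg1 HB' HC).
rewrite Ee; apply: (Ls_step Hin Eg1 HC).
exact: Hv _ (subst_occ_beta Hs HC).
Qed.

Lemma lang_Lsem A w : langA G A w <-> Lsem A w.
Proof.
split; last exact: Lsem_langA.
case=> alpha [Hd [Hg <-]].
have [_ H] := derives_Lsem Hd.
move/eqP: Hg => Hg.
rewrite -(@nuv_ground _ (fun _ => teps) alpha) //.
apply: H => B HB; have := occ_nnt HB; lia.
Qed.

End Gram.
End Sem.
Arguments Lsem {Sigma} G _ _.


Definition asb (P : Prop) : bool := if excluded_middle_informative P then true else false.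
Lemma asbP (P : Prop) : reflect P (asb P).
Proof. by rewrite /asb; case: excluded_middle_informative => H; constructor. Qed.

Lemma In_mem (T : eqType) (x : T) s : x \in s -> List.In x s.
Proof. elim: s => //= y s IH; rewrite inE => /orP [/eqP ->|/IH]; auto. Qed.

Section Steps.
Variable Sigma : finType.
Notation tup := (tup Sigma).

Inductive step := SL of tup | SR of tup | SO of nat & tup.

Definition su (s : step) : tup := match s with SL u | SR u | SO _ u => u end.

Definition stepf (s : step) (x : tup) : tup :=
  match s with
  | SL u => tcat u x
  | SR u => tcat x u
  | SO j u => todot j x u
  end.

Definition steprk (s : step) (r : nat) : nat :=
  match s with
  | SL u => trank u + r
  | SR u => r + trank u
  | SO j u => (r + trank u).-1
  end.

Definition stepok (k : nat) (s : step) (r : nat) : bool :=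
  match s with
  | SL u | SR u => [&& trank u + r <= k, tlen u <= 1 & u != teps]
  | SO j u => [&& 1 <= j <= k, j <= r, r <= k, r + trank u <= k.+1 & tlen u <= 1]
  end.

Definition stept (N : Type) (s : step) (Z : N) : term Sigma N :=
  match s with
  | SL u => TCat (TTup u) (TNt Z)
  | SR u => TCat (TNt Z) (TTup u)
  | SO j u => TOdot j (TNt Z) (TTup u)
  end.

Lemma stept_nuv N (v : N -> tup) s Z : nuv v (stept s Z) = stepf s (v Z).
Proof. by case: s. Qed.

Lemma stepf_rank k s r x : stepok k s r -> trank x = r -> trank (stepf s x) = steprk s r.
Proof.
case: s => [u|u|j u] /=.
- by move=> _ <-; rewrite trank_tcat.
- by move=> _ <-; rewrite trank_tcat.
- case/and5P => /andP [j1 jk] jr _ _ _ Hx; rewrite trank_todot; last by rewrite Hx j1.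
  rewrite Hx; lia.
Qed.

Lemma stepf_tlen k s r x : stepok k s r -> trank x = r -> tlen (stepf s x) = tlen x + tlen (su s).
Proof.
case: s => [u|u|j u] /=.
- by move=> _ _; rewrite tlen_tcat addnC.
- by move=> _ _; rewrite tlen_tcat.
- case/and5P => /andP [j1 jk] jr _ _ _ Hx; rewrite tlen_todot //; by rewrite Hx j1.
Qed.

Lemma steprk_le k s r : stepok k s r -> steprk s r <= k.
Proof. case: s => [u|u|j u] /=; [case/and3P|case/and3P|case/and5P]; lia. Qed.

Lemma stept_ok (N : Type) (rk : N -> nat) k s Z : stepok k s (rk Z) ->
  [/\ correct rk k (stept s Z), trk rk (stept s Z) = steprk s (rk Z),
      leaves_short (stept s Z), nnt (stept s Z) = 1 & occ Z (stept s Z)].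
Proof.
case: s => [u|u|j u] /=.
- case/and3P => H1 H2 H3; split; rewrite /= ?andbT //; last by right.
  apply/and3P; split; lia.
- case/and3P => H1 H2 H3; split; rewrite /= ?andbT //; last by left.
  apply/and3P; split; lia.
- case/and5P => /andP [j1 jk] jr rk1 H4 H5; split; rewrite /= ?andbT //; last by left.
  apply/and5P; split => //; lia.
Qed.

End Steps.

Inductive hrule (Sigma : finType) (N : Type) :=
| HStep of step Sigma & N | HUnit of N | HGround of tup Sigma.
Arguments HUnit {Sigma N}.
Arguments HGround {Sigma N}.
Arguments HStep {Sigma N}.

Section Norm.
Variables (Sigma : finType) (k : nat) (NT : finType) (rk' : NT -> nat) (S0 : NT).
Variable hr : seq (NT * hrule Sigma NT).
Notation tup := (tup Sigma).

Definition hwf (X : NT) (r : hrule Sigma NT) : bool :=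
  match r with
  | HStep s Z => stepok k s (rk' Z) && (rk' X == steprk s (rk' Z))
  | HUnit Z => rk' X == rk' Z
  | HGround g => [&& tlen g <= 1, trank g == rk' X & rk' X <= k]
  end.

Inductive LH : NT -> tup -> Prop :=
| LH_g X g : List.In (X, HGround g) hr -> LH X g
| LH_u X Z x : List.In (X, HUnit Z) hr -> LH Z x -> LH X x
| LH_s X s Z x : List.In (X, HStep s Z) hr -> LH Z x -> LH X (stepf s x).

Inductive U : NT -> NT -> Prop :=
| U_refl X : U X X
| U_step X Y Z : List.In (X, HUnit Y) hr -> U Y Z -> U X Z.

Hypothesis wf : forall X r, List.In (X, r) hr -> hwf X r.
Hypothesis S0rk : rk' S0 = 0.

Lemma U_trans X Y Z : U X Y -> U Y Z -> U X Z.
Proof. elim => // X0 Y0 Z0 H _ IH HZ; exact: U_step H (IH HZ). Qed.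

Lemma U_LH X Y x : U X Y -> LH Y x -> LH X x.
Proof. elim => // X0 Y0 Z0 H _ IH HZ; exact: LH_u H (IH HZ). Qed.

Lemma U_rk X Y : U X Y -> rk' X = rk' Y.
Proof. elim => // X0 Y0 Z0 H _ <-; by have /eqP := wf H. Qed.

Lemma LH_rank X x : LH X x -> trank x = rk' X.
Proof.
elim => [X0 g H|X0 Z x0 H _ IH|X0 s Z x0 H _ IH].
- by have /and3P [_ /eqP -> _] := wf H.
- by have /eqP -> := wf H.
- have /andP [H1 /eqP ->] := wf H; exact: stepf_rank H1 IH.
Qed.

Definition epsZ (Z : NT) : tup := eps Sigma (rk' Z).

Definition mkrules (X : NT) (r : hrule Sigma NT) : seq (NT * term Sigma NT) :=
  match r with
  | HStep s Z => (X, stept s Z) ::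
      (if asb (LH Z (epsZ Z)) && (tlen (stepf s (epsZ Z)) == 1)
       then [:: (X, TTup (stepf s (epsZ Z)))] else [::])
  | HUnit _ => [::]
  | HGround g => if tlen g == 1 then [:: (X, TTup g)] else [::]
  end.

Definition rules' : seq (NT * term Sigma NT) :=
  List.flat_map (fun X => List.flat_map (fun Yr : NT * hrule Sigma NT =>
      if asb (U X Yr.1) then mkrules X Yr.2 else [::]) hr) (enum NT)
  ++ (if asb (LH S0 teps) then [:: (S0, TTup teps)] else [::]).

Definition G' : grammar Sigma := @Grammar Sigma NT rk' rules' S0.

Lemma rules'_inv X alpha : List.In (X, alpha) rules' ->
  (exists Y s Z, U X Y /\ List.In (Y, HStep s Z) hr /\ alpha = stept s Z) \/
  (exists Y s Z, U X Y /\ List.In (Y, HStep s Z) hr /\ LH Z (epsZ Z) /\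
                 tlen (stepf s (epsZ Z)) = 1 /\ alpha = TTup (stepf s (epsZ Z))) \/
  (exists Y g, U X Y /\ List.In (Y, HGround g) hr /\ tlen g = 1 /\ alpha = TTup g) \/
  (X = S0 /\ alpha = TTup teps /\ LH S0 teps).
Proof.
move=> Hin0; case: (List.in_app_or _ _ _ Hin0).
  case/List.in_flat_map => X0 [_ /List.in_flat_map [[Y r] [Hin]]] /=.
  case: asbP => // HU.
  case: r Hin => [s Z|Z|g] Hin /=.
  - case=> [[<- <-]|]; first by left; exists Y, s, Z.
    case: ifP => // /andP [/asbP H1 /eqP H2] [] // [<- <-].
    by right; left; exists Y, s, Z.
  - by [].
  - case: ifP => // /eqP H [] // [<- <-].
    by right; right; left; exists Y, g.
case: asbP => // H [] // [<- <-]; by right; right; right.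
Qed.

Lemma rules'_in X Y r alpha : U X Y -> List.In (Y, r) hr -> List.In (X, alpha) (mkrules X r) ->
  List.In (X, alpha) rules'.
Proof.
move=> HU Hin Hm; apply: List.in_or_app; left.
apply/List.in_flat_map; exists X; split; first by apply: In_mem; rewrite mem_enum.
apply/List.in_flat_map; exists (Y, r); split => //=.
by case: asbP.
Qed.

Lemma G'_kdcfg : is_kdcfg k G'.
Proof.
split => // A alpha /rules'_inv.
case=> [[Y [s [Z [HU [Hin ->]]]]]|[[Y [s [Z [HU [Hin [HL [Ht ->]]]]]]]|[[Y [g [HU [Hin [Ht ->]]]]]|[-> [-> _]]]]].
- have /andP [H1 /eqP H2] := wf Hin.
  have [C T L _ _] := stept_ok H1; split => //=.
  by rewrite (U_rk HU) T.
- have /andP [H1 /eqP H2] := wf Hin.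
  have R := stepf_rank H1 (trank_eps _ _); rewrite /epsZ.
  split => /=; last by rewrite Ht.
    by rewrite R; apply: steprk_le H1.
  by rewrite (U_rk HU) H2 R.
- have /and3P [H1 /eqP H2 H3] := wf Hin.
  split => /=; last by rewrite Ht.
    by rewrite H2.
  by rewrite (U_rk HU) H2.
- by split.
Qed.

Lemma G'_normal A alpha : List.In (A, alpha) (rules G') -> normal_rule G' A alpha.
Proof.
move/rules'_inv.
case=> [[Y [s [Z [HU [Hin ->]]]]]|[[Y [s [Z [HU [Hin [HL [Ht ->]]]]]]]|[[Y [g [HU [Hin [Ht ->]]]]]|[-> [-> _]]]]].
- have /andP [H1 _] := wf Hin.
  case: s H1 {Hin} => [u|u|j u] /=.
  + case/and3P => _ H2 /eqP H3; left; exists u, Z; split => //; by left.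
  + case/and3P => _ H2 /eqP H3; left; exists u, Z; split => //; by right.
  + case/and5P => _ _ _ _ H5; right; left; exists Z, j, u; by split.
- by right; right; left; eexists.
- by right; right; left; eexists.
- by right; right; right.
Qed.

Lemma G'_linear : linear_grammar G'.
Proof.
move=> A alpha /rules'_inv.
case=> [[Y [s [Z [HU [Hin ->]]]]]|[[Y [s [Z [HU [Hin [HL [Ht ->]]]]]]]|[[Y [g [HU [Hin [Ht ->]]]]]|[_ [-> _]]]]] //.
by case: s {Hin}.
Qed.

Lemma G'_sound X x : Lsem G' X x -> LH X x.
Proof.
elim => [A alpha Hin E|A alpha B x0 Hin E Ho _ IH].
  move/rules'_inv: Hin E.
  case=> [[Y [s [Z [HU [Hin ->]]]]]|[[Y [s [Z [HU [Hin [HL [Ht ->]]]]]]]|[[Y [g [HU [Hin [Ht ->]]]]]|[-> [-> HL]]]]] E.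
  - by case: s {Hin} E.
  - by apply: U_LH HU _; apply: LH_s Hin HL.
  - by apply: U_LH HU _; apply: LH_g Hin.
  - by [].
move/rules'_inv: Hin E Ho.
case=> [[Y [s [Z [HU [Hin ->]]]]]|[[Y [s [Z [HU [Hin [HL [Ht ->]]]]]]]|[[Y [g [HU [Hin [Ht ->]]]]]|[-> [-> HL]]]]] E Ho //.
have EB : B = Z by case: s {Hin E} Ho => /= *; intuition.
subst B.
rewrite stept_nuv; apply: U_LH HU _; exact: LH_s Hin IH.
Qed.

Lemma rules'_U X Z alpha : U X Z -> List.In (Z, alpha) rules' ->
  List.In (X, alpha) rules' \/ alpha = TTup teps.
Proof.
move=> HXZ /rules'_inv.
case=> [[Y [s [Z' [HU [Hin ->]]]]]|[[Y [s [Z' [HU [Hin [HL [Ht ->]]]]]]]|[[Y [g [HU [Hin [Ht ->]]]]]|[_ [-> _]]]]]; last by right.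
- left; apply: (rules'_in (U_trans HXZ HU) Hin); by left.
- left; apply: (rules'_in (U_trans HXZ HU) Hin) => /=; right.
  by case: asbP => // _; rewrite Ht eqxx /=; left.
- left; apply: (rules'_in (U_trans HXZ HU) Hin) => /=.
  by rewrite Ht eqxx /=; left.
Qed.

Lemma G'_Ucl X Z x : U X Z -> Lsem G' Z x -> 0 < tlen x -> Lsem G' X x.
Proof.
move=> HU H; case: H HU => [A alpha Hin E|A alpha B x0 Hin E Ho HB] HU Ht.
  case: (rules'_U HU Hin) => [H|Ea]; first exact: (@Ls_ground _ G' X alpha H E).
  by move: Ht; rewrite Ea.
case: (rules'_U HU Hin) => [H|Ea]; first exact: (@Ls_step _ G' X alpha B x0 H E Ho HB).
by move: E; rewrite Ea.
Qed.

Lemma G'_complete X x : LH X x -> 0 < tlen x -> Lsem G' X x.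
Proof.
elim => [X0 g Hin|X0 Z x0 Hin HL IH|X0 s Z x0 Hin HL IH] Ht.
- have /and3P [H1 _ _] := wf Hin.
  have Hg : tlen g = 1 by lia.
  have : List.In (X0, TTup g) rules'.
    apply: (rules'_in (U_refl _) Hin) => /=; by rewrite Hg eqxx /=; left.
  move=> Hin'; exact: (@Ls_ground _ G' X0 (TTup g) Hin' (erefl _)).
- exact: G'_Ucl (U_step Hin (U_refl _)) (IH Ht) Ht.
- have /andP [H1 H2] := wf Hin.
  have Rx := LH_rank HL.
  have Et := stepf_tlen H1 Rx.
  case: (posnP (tlen x0)) => Ex.
  + have Ee : x0 = epsZ Z by rewrite /epsZ -Rx; exact: tlen0_eps.
    have Hs : tlen (stepf s x0) = 1.
      have Hu : tlen (su s) <= 1.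
        by move: H1; case: (s) => [u|u|j u] /=; [case/and3P|case/and3P|case/and5P].
      lia.
    have : List.In (X0, TTup (stepf s x0)) rules'.
      apply: (rules'_in (U_refl _) Hin) => /=; right.
      case: asbP => [_|]; last by rewrite -Ee.
      by rewrite -Ee Hs eqxx /=; left.
    move=> Hin'; exact: (@Ls_ground _ G' X0 (TTup (stepf s x0)) Hin' (erefl _)).
  + have := @Ls_step _ G' X0 (stept s Z) Z x0.
    have [_ _ _ N1 O1] := stept_ok H1.
    rewrite stept_nuv; apply => //; last exact: IH.
    apply: (rules'_in (U_refl _) Hin); by left.
Qed.

Lemma G'_lang w : Lsem G' S0 w <-> LH S0 w.
Proof.
split; first exact: G'_sound.
move=> H; case: (posnP (tlen w)) => Ew; last exact: G'_complete.
have Ew' : w = teps.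
  by rewrite (tlen0_eps Ew) (LH_rank H) S0rk.
have : List.In (S0, TTup teps) rules'.
  apply: List.in_or_app; right; case: asbP => [_|]; [by left| by rewrite -Ew'].
move=> Hin'; rewrite Ew'; exact: (@Ls_ground _ G' S0 (TTup teps) Hin' (erefl _)).
Qed.

End Norm.


Section Chain.
Variable Sigma : finType.
Notation tup := (tup Sigma).
Notation word := (seq (option Sigma)).
Notation step := (step Sigma).
Implicit Types (q : word) (x y : tup) (ss : seq step).

Definition sym (o : option Sigma) : tup := tw [:: o].
Definition catL q : seq step := map (fun o => SL (sym o)) q.
Definition catR q : seq step := rev (map (fun o => SR (sym o)) q).
Definition applyS ss x := foldr (@stepf Sigma) x ss.
Definition rankafter ss r := foldr (@steprk Sigma) r ss.
Fixpoint chainok k r ss : bool :=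
  if ss is s :: ss' then chainok k r ss' && stepok k s (rankafter ss' r) else true.

Lemma applyS_cat s1 s2 x : applyS (s1 ++ s2) x = applyS s1 (applyS s2 x).
Proof. by rewrite /applyS foldr_cat. Qed.
Lemma rankafter_cat s1 s2 r : rankafter (s1 ++ s2) r = rankafter s1 (rankafter s2 r).
Proof. by rewrite /rankafter foldr_cat. Qed.
Lemma chainok_cat k r s1 s2 :
  chainok k r (s1 ++ s2) = chainok k r s2 && chainok k (rankafter s2 r) s1.
Proof.
elim: s1 => [|s s1 IH] /=; first by rewrite andbT.
by rewrite IH rankafter_cat andbA.
Qed.

Lemma enc_sym o : enc (sym o) = [:: o].
Proof. exact: enc_tw. Qed.

Lemma sym_neq o : sym o != teps.
Proof. by apply/eqP => E; have := enc_sym o; rewrite E. Qed.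

Lemma catL_sem q x : enc (applyS (catL q) x) = q ++ enc x.
Proof. by elim: q => //= o q IH; rewrite enc_tcat enc_sym IH. Qed.

Lemma catR_sem q x : enc (applyS (catR q) x) = enc x ++ q.
Proof.
elim: q x => [|o q IH] x /=; first by rewrite cats0.
rewrite /catR /= rev_cons -cats1 applyS_cat -/(catR q) IH /= enc_tcat enc_sym.
by rewrite -catA.
Qed.

Lemma catL_ok k r q : r + nn q <= k ->
  chainok k r (catL q) /\ rankafter (catL q) r = r + nn q.
Proof.
elim: q => [|o q IH] /=; first by rewrite addn0.
move=> H; have [H1 H2] : chainok k r (catL q) /\ rankafter (catL q) r = r + nn q.
  by apply: IH; move: H; rewrite /nn /=; lia.
rewrite H1 H2 /= trankE tlenE enc_sym sym_neq andbT.
split; rewrite /nn /ns /=; move: H; rewrite /nn /=; case: (o == None) => /=; lia.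
Qed.

Lemma catR_ok k r q : r + nn q <= k ->
  chainok k r (catR q) /\ rankafter (catR q) r = r + nn q.
Proof.
elim: q r => [|o q IH] r /=; first by rewrite addn0.
move=> H.
rewrite /catR /= rev_cons -cats1 -/(catR q) chainok_cat rankafter_cat /=.
have So : stepok k (SR (sym o)) r.
  rewrite /= trankE tlenE enc_sym sym_neq andbT.
  apply/andP; split; rewrite /nn /ns /=; move: H; rewrite /nn /=; case: (o == None) => /=; lia.
have Tr : trank (sym o) = nn [:: o] by rewrite trankE enc_sym.
have [H1 H2] := IH (r + nn [:: o]) ltac:(move: H; rewrite /nn /=; lia).
split; first by apply/andP; split; [exact: So | rewrite Tr].
rewrite Tr H2 /nn /=; lia.
Qed.

Lemma catL_val u y : applyS (catL (enc u)) y = tcat u y.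
Proof. by apply: enc_inj; rewrite catL_sem enc_tcat. Qed.
Lemma catR_val u y : applyS (catR (enc u)) y = tcat y u.
Proof. by apply: enc_inj; rewrite catR_sem enc_tcat. Qed.

Definition fL j (o : option Sigma) : step := SO j (tw [:: o; None]).
Definition fR j (o : option Sigma) : step := SO j (tw [:: None; o]).
Definition isNone (o : option Sigma) : bool := o == None.

Definition n4 j q : seq step :=
  let p := find isNone q in
  if p < size q then map (fR j) (drop p.+1 q) ++ map (fL j) (rev (take p q))
  else SO j (tw [::]) :: map (fL j) (rev q).

Definition n3 j q : seq step := catL (cut j q).1 ++ catR (cut j q).2.


Lemma L4a j (L : word) y (P Qw : word) : nn L = 0 -> 1 <= j -> enc y = P ++ None :: Qw -> nn P = j.-1 ->
  enc (applyS (map (fL j) (rev L)) y) = P ++ L ++ None :: Qw.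
Proof.
move=> HL J Ey EP; elim/last_ind: L HL => [|L o IH] HL /=; first by [].
have HL' : nn L = 0 by move: HL; rewrite -cats1 nn_cat; lia.
have Ho : nn [:: o] = 0 by move: HL; rewrite -cats1 nn_cat; lia.
rewrite rev_rcons /= enc_todot.
  rewrite IH // enc_tw catA repl_eq ?nn_cat ?HL' ?addn0 //.
  by rewrite -cats1 -!catA.
rewrite trankE IH // !nn_cat EP HL' /=; rewrite /nn /=; lia.
Qed.

Lemma L4b j (R : word) y (P Qw : word) : 1 <= j -> enc y = P ++ None :: Qw -> nn P = j.-1 ->
  enc (applyS (map (fR j) R) y) = P ++ None :: R ++ Qw.
Proof.
move=> J Ey EP; elim: R => [|o R IH] /=; first by [].
rewrite enc_todot.
  by rewrite IH enc_tw repl_eq.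
rewrite trankE IH // !nn_cat EP /=; rewrite /nn /=; lia.
Qed.

Lemma n4_val j u y : 1 <= j <= trank y -> applyS (n4 j (enc u)) y = todot j y u.
Proof.
move=> H; apply: enc_inj; rewrite enc_todot // -(enc_tw (enc u)) tw_enc.
rewrite trankE in H; have [Ey EP] := cutP H.
case E: (cut j (enc y)) Ey EP => [P Qw] /= Ey EP.
have J : 1 <= j by case/andP: H.
set q := enc u.
rewrite Ey repl_eq //.
rewrite /n4; case: ifP => Hp.
- have Hq : q = take (find isNone q) q ++ None :: drop (find isNone q).+1 q.
    have /eqP Hn := nth_find None (ltac:(by rewrite has_find) : has isNone q).
    by rewrite -{1}(cat_take_drop (find isNone q) q) (drop_nth None Hp) Hn.
  have HL : nn (take (find isNone q) q) = 0.
    apply/eqP; rewrite /nn -leqn0 leqNgt -has_count; apply/negP => /hasP [o Ho Hno].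
    move/(nthP None): Ho => [i Hi Ei].
    rewrite size_takel in Hi; last exact: ltnW.
    have := before_find None Hi; rewrite -(nth_take None (n0 := find isNone q)) // Ei.
    by rewrite /isNone Hno.
  rewrite applyS_cat (@L4b j (drop (find isNone q).+1 q) _ (P ++ take (find isNone q) q) Qw J); first last.
  - by rewrite nn_cat HL EP addn0.
  - by rewrite (L4a HL J Ey EP) catA.
  rewrite -catA; congr (P ++ _); rewrite [in RHS]Hq -catA //.
- have HL : nn q = 0.
    apply/eqP; rewrite /nn -leqn0 leqNgt -has_count.
    by rewrite has_find Hp.
  rewrite /= enc_todot.
    rewrite (L4a HL J Ey EP) enc_tw /= catA repl_eq //; first by rewrite -catA.
    by rewrite nn_cat EP HL addn0.
  rewrite trankE (L4a HL J Ey EP) nn_cat EP nn_cat HL /=; rewrite /nn /=; lia.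
Qed.

Lemma trank_tw (w : word) : trank (tw w) = nn w.
Proof. by rewrite trankE enc_tw. Qed.
Lemma tlen_tw (w : word) : tlen (tw w) = ns w.
Proof. by rewrite tlenE enc_tw. Qed.

Lemma fL_ok k j r (Ls : word) : nn Ls = 0 -> 1 <= j <= k -> j <= r -> r <= k ->
  chainok k r (map (fL j) Ls) /\ rankafter (map (fL j) Ls) r = r.
Proof.
move=> HL J1 J2 R; elim: Ls HL => [|o Ls IH] //= HL.
have Ho : o == None = false by move: HL; rewrite /nn /=; case: (o == None).
have HL' : nn Ls = 0 by move: HL; rewrite /nn /= Ho.
have [-> ->] := IH HL'; split; last by rewrite /= trank_tw /nn /= Ho; lia.
rewrite /= trank_tw tlen_tw /nn /ns /= Ho J1 J2 R /=; lia.
Qed.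

Lemma fR_ok k j r (R : word) : 1 <= j <= k -> j <= r -> r + nn R <= k ->
  chainok k r (map (fR j) R) /\ rankafter (map (fR j) R) r = r + nn R.
Proof.
move=> J1 J2; elim: R => [|o R IH] /= HR; first by rewrite addn0.
have [-> ->] : chainok k r (map (fR j) R) /\ rankafter (map (fR j) R) r = r + nn R.
  by apply: IH; move: HR; rewrite /nn /=; lia.
split; last by rewrite /= trank_tw /nn /=; case: (o == None) => /=; lia.
rewrite /= trank_tw tlen_tw /nn /ns /= J1 /=.
move: HR J1 J2; rewrite /nn /=; case: (o == None) => /=; lia.
Qed.

Lemma n4_ok k j r q : 1 <= j <= k -> j <= r -> r <= k -> r + nn q <= k.+1 ->
  chainok k r (n4 j q) /\ rankafter (n4 j q) r = (r + nn q).-1.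
Proof.
move=> J1 J2 R Hq.
rewrite /n4; case: ifP => Hp.
- have Hq' : q = take (find isNone q) q ++ None :: drop (find isNone q).+1 q.
    have /eqP Hn := nth_find None (ltac:(by rewrite has_find) : has isNone q).
    by rewrite -{1}(cat_take_drop (find isNone q) q) (drop_nth None Hp) Hn.
  have HL : nn (take (find isNone q) q) = 0.
    apply/eqP; rewrite /nn -leqn0 leqNgt -has_count; apply/negP => /hasP [o Ho Hno].
    move/(nthP None): Ho => [i Hi Ei].
    rewrite size_takel in Hi; last exact: ltnW.
    have := before_find None Hi; rewrite -(nth_take None (n0 := find isNone q)) // Ei.
    by rewrite /isNone Hno.
  have HL' : nn (rev (take (find isNone q) q)) = 0 by rewrite /nn count_rev.
  have Enn : nn q = (nn (drop (find isNone q).+1 q)).+1.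
    by rewrite {1}Hq' nn_cat HL /nn /=.
  rewrite chainok_cat rankafter_cat.
  have [-> ->] := fL_ok HL' J1 J2 R.
  have [-> ->] := @fR_ok k j r (drop (find isNone q).+1 q) J1 J2 ltac:(lia).
  split => //; lia.
- have HL : nn q = 0.
    apply/eqP; rewrite /nn -leqn0 leqNgt -has_count.
    by rewrite has_find Hp.
  have HL' : nn (rev q) = 0 by rewrite /nn count_rev.
  rewrite /=; have [-> ->] := fL_ok HL' J1 J2 R.
  rewrite /= trank_tw tlen_tw HL J1 J2 R /nn /ns /=; split; lia.
Qed.

Lemma n3_val j u y : 1 <= j <= trank u -> applyS (n3 j (enc u)) y = todot j u y.
Proof.
move=> H; apply: enc_inj; rewrite enc_todot // /n3 applyS_cat catL_sem catR_sem.
rewrite trankE in H; have [Ey EP] := cutP H.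
case E: (cut j (enc u)) Ey EP => [P Qw] /= Ey EP.
by rewrite [in RHS]Ey repl_eq // ?catA //; case/andP: H.
Qed.

Lemma n3_ok k j r q : 1 <= j <= nn q -> r + nn q <= k.+1 ->
  chainok k r (n3 j q) /\ rankafter (n3 j q) r = (r + nn q).-1.
Proof.
move=> H Hq; have [Ey EP] := cutP H.
rewrite /n3; case E: (cut j q) Ey EP => [P Qw] /= Ey EP.
have Enn : nn q = (nn P + nn Qw).+1 by rewrite {1}Ey nn_cat /nn /=; lia.
rewrite chainok_cat rankafter_cat.
have [-> ->] := @catR_ok k r Qw ltac:(lia).
have [-> ->] := @catL_ok k (r + nn Qw) P ltac:(lia).
split => //; lia.
Qed.

End Chain.

Section Chain2.
Variable Sigma : finType.
Notation tup := (tup Sigma).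
Notation word := (seq (option Sigma)).
Notation step := (step Sigma).

Inductive bot (N : Type) := BNt of N | BGr of tup.
Arguments BGr {N}.

Definition isSome' (o : option Sigma) : bool := o != None.

Definition gchain (N : Type) (u : tup) : seq step * bot N :=
  let q := enc u in let p := find isSome' q in
  if p < size q then (catL (take p q) ++ catR (drop p.+1 q), BGr (sym (nth None q p)))
  else ([::], BGr u).

Lemma gchain_sem N k u : trank u <= k ->
  match @gchain N u with
  | (ss, BGr g) => [/\ u = applyS ss g, tlen g <= 1, trank g <= k,
                      chainok k (trank g) ss & rankafter ss (trank g) = trank u]
  | _ => False end.
Proof.
move=> Hu; rewrite /gchain; set q := enc u; case: ifP => Hp.
- set p := find isSome' q.
  have Ha := nth_find None (ltac:(by rewrite has_find) : has isSome' q).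
  have Hq : q = take p q ++ nth None q p :: drop p.+1 q.
    by rewrite -{1}(cat_take_drop p q) (drop_nth None Hp).
  have Tr : trank (sym (nth None q p)) = 0.
    by rewrite trankE enc_sym /nn /=; move: Ha; rewrite /isSome'; case: (_ == None).
  have Enn : nn q = nn (take p q) + nn (drop p.+1 q).
    by rewrite {1}Hq nn_cat /nn /=; move: Ha; rewrite /isSome'; case: (_ == None).
  have Eu : trank u = nn q by rewrite trankE.
  split.
  + apply: enc_inj; rewrite applyS_cat catL_sem catR_sem enc_sym /=.
    by rewrite -/q {1}Hq.
  + by rewrite tlenE enc_sym /ns /=; case: (_ != None).
  + by rewrite Tr.
  + rewrite Tr chainok_cat.
    have [-> ->] := @catR_ok _ k 0 (drop p.+1 q) ltac:(lia).
    by have [-> _] := @catL_ok _ k (0 + nn (drop p.+1 q)) (take p q) ltac:(lia).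
  + rewrite Tr rankafter_cat.
    have [_ ->] := @catR_ok _ k 0 (drop p.+1 q) ltac:(lia).
    have [_ ->] := @catL_ok _ k (0 + nn (drop p.+1 q)) (take p q) ltac:(lia).
    lia.
- have Hn : ~~ has isSome' q by rewrite has_find Hp.
  split => //.
  rewrite tlenE -/q.
  have : ns q = 0 by apply/eqP; rewrite /ns -leqn0 leqNgt -has_count; exact: Hn.
  lia.
Qed.

Section N.
Variables (N : Type) (rk : N -> nat) (k : nat).
Implicit Types (t a b : term Sigma N) (v : N -> tup).

Fixpoint chain (t : term Sigma N) : seq step * bot N :=
  match t with
  | TTup u => gchain N u
  | TNt B => ([::], BNt B)
  | TCat a b =>
      if nnt a != 0 then (catR (enc (nu b)) ++ (chain a).1, (chain a).2)
      else if nnt b != 0 then (catL (enc (nu a)) ++ (chain b).1, (chain b).2)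
      else gchain N (nu (TCat a b))
  | TOdot j a b =>
      if nnt a != 0 then (n4 j (enc (nu b)) ++ (chain a).1, (chain a).2)
      else if nnt b != 0 then (n3 j (enc (nu a)) ++ (chain b).1, (chain b).2)
      else gchain N (nu (TOdot j a b))
  end.

Lemma trk_le t : correct rk k t -> trk rk t <= k.
Proof. by case: t => //= [a b /and3P [_ _ H]|j a b /and5P [_ _ _ _ H]]; lia. Qed.

Lemma rank_nuv v t : correct rk k t -> (forall B, occ B t -> trank (v B) = rk B) ->
  trank (nuv v t) = trk rk t.
Proof.
elim: t => //= [A _ H|a IHa b IHb /and3P [ca cb _] H|j a IHa b IHb /and5P [ca cb J1 J2 _] H].
- exact: H.
- by rewrite trank_tcat IHa ?IHb // => B HB; apply: H; [right|left].
- have Ra : trank (nuv v a) = trk rk a by apply: IHa => // B HB; apply: H; left.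
  have Rb : trank (nuv v b) = trk rk b by apply: IHb => // B HB; apply: H; right.
  rewrite trank_todot Ra ?Rb; first lia.
  by rewrite J2 andbT; case/andP: J1.
Qed.

Lemma rank_nu t : correct rk k t -> nnt t = 0 -> trank (nu t) = trk rk t.
Proof.
move=> C E; rewrite -(@nuv_ground _ _ (fun _ => teps) t E); apply: rank_nuv => // B HB.
by have := occ_nnt HB; rewrite E.
Qed.

Definition chain_spec t (c : seq step * bot N) : Prop :=
  match c with
  | (ss, BNt B) => [/\ occ B t, (forall x, trank x = rk B -> nuv (fun _ => x) t = applyS ss x),
                    chainok k (rk B) ss & rankafter ss (rk B) = trk rk t]
  | (ss, BGr g) => [/\ nnt t = 0, nu t = applyS ss g, (tlen g <= 1) && (trank g <= k),
                    chainok k (trank g) ss & rankafter ss (trank g) = trk rk t]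
  end.

Lemma gchain_case t : correct rk k t -> nnt t = 0 -> chain_spec t (gchain N (nu t)).
Proof.
move=> C E; have R := rank_nu C E; have Hk := trk_le C.
have := @gchain_sem N k (nu t) ltac:(lia).
case: (gchain N (nu t)) => ss [B|g] //= [H1 H2 H3 H4 H5]; split => //; try lia; by rewrite H2 H3.
Qed.

Lemma chain_sem t : correct rk k t -> nnt t <= 1 -> chain_spec t (chain t).
Proof.
elim: t => [u|B|a IHa b IHb|j a IHa b IHb] /=.
- by move=> C _; exact: (@gchain_case (TTup u) C erefl).
- by move=> _ _; split => //.
- move=> /and3P [ca cb Hk] Hn.
  have Ra := trk_le ca; have Rb := trk_le cb.
  case: (posnP (nnt a)) => Ea.
  + rewrite /=; case: (posnP (nnt b)) => Eb.
    * rewrite /=; apply: gchain_case => /=; [by rewrite ca cb Hk | lia].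
    * rewrite /=.
      have := IHb cb ltac:(lia); case: (chain b) => ss [B|g] /=; last by case; lia.
      case=> H1 H2 H3 H4; have Rna := rank_nu ca Ea.
      have Q := @catL_ok _ k (rankafter ss (rk B)) (enc (nu a)) ltac:(rewrite -trankE; lia).
      case: Q => Q1 Q2.
      split; first by right.
      * move=> x Hx; rewrite applyS_cat catL_val -H2 // (@nuv_ground _ _ _ a) //.
      * by rewrite chainok_cat H3 Q1.
      * by rewrite rankafter_cat Q2 -trankE Rna H4 addnC.
  + have Eb : nnt b = 0 by lia.
    rewrite /=.
    have := IHa ca ltac:(lia); case: (chain a) => ss [B|g] /=; last by case; lia.
    case=> H1 H2 H3 H4; have Rnb := rank_nu cb Eb.
    have Q := @catR_ok _ k (rankafter ss (rk B)) (enc (nu b)) ltac:(rewrite -trankE; lia).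
    case: Q => Q1 Q2.
    split; first by left.
    * move=> x Hx; rewrite applyS_cat catR_val -H2 // (@nuv_ground _ _ _ b) //.
    * by rewrite chainok_cat H3 Q1.
    * by rewrite rankafter_cat Q2 -trankE Rnb H4.
- move=> /and5P [ca cb J1 J2 Hk] Hn.
  have Ra := trk_le ca; have Rb := trk_le cb.
  case: (posnP (nnt a)) => Ea.
  + rewrite /=; case: (posnP (nnt b)) => Eb.
    * rewrite /=; apply: gchain_case => /=; [by rewrite ca cb J1 J2 Hk | lia].
    * rewrite /=.
      have := IHb cb ltac:(lia); case: (chain b) => ss [B|g] /=; last by case; lia.
      case=> H1 H2 H3 H4; have Rna := rank_nu ca Ea.
      have Q := @n3_ok _ k j (rankafter ss (rk B)) (enc (nu a))
        ltac:(rewrite -trankE Rna J2 andbT; by case/andP: J1) ltac:(rewrite -trankE; lia).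
      case: Q => Q1 Q2.
      split; first by right.
      * move=> x Hx; rewrite applyS_cat n3_val; last by rewrite Rna J2 andbT; case/andP: J1.
        by rewrite -H2 // (@nuv_ground _ _ _ a).
      * by rewrite chainok_cat H3 Q1.
      * by rewrite rankafter_cat Q2 -trankE Rna H4 addnC.
  + have Eb : nnt b = 0 by lia.
    rewrite /=.
    have := IHa ca ltac:(lia); case: (chain a) => ss [B|g] /=; last by case; lia.
    case=> H1 H2 H3 H4; have Rnb := rank_nu cb Eb.
    have Q := @n4_ok _ k j (rankafter ss (rk B)) (enc (nu b)) J1 ltac:(lia) ltac:(lia)
       ltac:(rewrite -trankE; lia).
    case: Q => Q1 Q2.
    split; first by left.
    * move=> x Hx.
      have Rx : trank (nuv (fun _ => x) a) = trk rk a.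
        apply: rank_nuv => // B' HB'; rewrite Hx; congr rk.
        by apply: (occ_uniq (t := a)) => //; lia.
      rewrite applyS_cat n4_val; last by rewrite -H2 // Rx J2 andbT; case/andP: J1.
      by rewrite -H2 // (@nuv_ground _ _ _ b).
    * by rewrite chainok_cat H3 Q1.
    * by rewrite rankafter_cat Q2 -trankE Rnb H4.
Qed.

End N.
End Chain2.
Arguments BNt {Sigma N}.
Arguments BGr {Sigma N}.


Lemma In_nth (T : Type) (d : T) (s : seq T) i : i < size s -> List.In (nth d s i) s.
Proof. elim: s i => [|x s IH] [|i] //= H; [by left | right; exact: IH]. Qed.

Lemma nth_of_In (T : Type) (d : T) (s : seq T) x : List.In x s -> exists2 i, i < size s & nth d s i = x.
Proof.
elim: s => [|y s IH] //= [->|/IH [i Hi E]]; first by exists 0.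
by exists i.+1.
Qed.

Section Build.
Variables (Sigma : finType) (k : nat) (G : grammar Sigma).
Hypothesis kd : is_kdcfg k G.
Hypothesis lin : linear_grammar G.
Notation NT := (nt G).
Notation tup := (tup Sigma).
Notation rkG := (rk G).

Definition n := size (rules G).
Definition dflt : NT * term Sigma NT := (start G, TNt (start G)).
Definition rule (i : nat) := nth dflt (rules G) i.
Definition ch (i : nat) := chain (rule i).2.
Definition ss (i : nat) := (ch i).1.
Definition m (i : nat) := size (ss i).
Definition Mp := \max_(i < n) m i.
Definition NT' : finType := (NT + ('I_n * 'I_Mp.+1))%type.
Definition dstep : step Sigma := SL teps.

Definition botrk (i : nat) : nat :=
  match (ch i).2 with BNt B => rkG B | BGr g => trank g end.

Definition name (i : 'I_n) (t : nat) : NT' :=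
  if t == 0 then inl (rule i).1
  else if t == m i then
    (match (ch i).2 with BNt B => inl B | BGr _ => inr (i, inord t) end)
  else inr (i, inord t).

Definition rk' (X : NT') : nat :=
  match X with
  | inl A => rkG A
  | inr (i, t) => rankafter (drop t (ss i)) (botrk i)
  end.

Definition final (i : 'I_n) : seq (NT' * hrule Sigma NT') :=
  match (ch i).2 with
  | BNt B => if m i == 0 then [:: (inl (rule i).1, HUnit (inl B))] else [::]
  | BGr g => [:: (name i (m i), HGround g)]
  end.

Definition rules_i (i : 'I_n) : seq (NT' * hrule Sigma NT') :=
  List.map (fun t => (name i t, HStep (nth dstep (ss i) t) (name i t.+1))) (iota 0 (m i))
  ++ final i.

Definition hr : seq (NT' * hrule Sigma NT') := List.flat_map rules_i (enum 'I_n).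

Lemma rule_in (i : 'I_n) : List.In (rule i) (rules G).
Proof. exact: In_nth. Qed.

Lemma rule_props (i : 'I_n) :
  [/\ correct rkG k (rule i).2, rkG (rule i).1 = trk rkG (rule i).2, nnt (rule i).2 <= 1
    & chain_spec rkG k (rule i).2 (ch i)].
Proof.
have H := rule_in i; rewrite /ch; case: (rule i) H => A alpha H /=.
have [_ H2] := kd; have [C R L] := H2 _ _ H; have N1 := lin H.
split => //; exact: chain_sem.
Qed.

Lemma m_lt (i : 'I_n) : m i < Mp.+1.
Proof. rewrite ltnS; exact: (@leq_bigmax _ (fun i : 'I_n => m i) i). Qed.

Lemma inordE (i : 'I_n) t : t <= m i -> (inord t : 'I_Mp.+1) = t :> nat.
Proof. move=> H; apply: inordK; have := m_lt i; lia. Qed.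

Lemma rankafter_drop (s : seq (step Sigma)) t r : t < size s ->
  rankafter (drop t s) r = steprk (nth dstep s t) (rankafter (drop t.+1 s) r).
Proof. by move=> H; rewrite (drop_nth dstep H). Qed.

Lemma applyS_drop (s : seq (step Sigma)) t x : t < size s ->
  applyS (drop t s) x = stepf (nth dstep s t) (applyS (drop t.+1 s) x).
Proof. by move=> H; rewrite (drop_nth dstep H). Qed.

Lemma chainok_drop (s : seq (step Sigma)) t r : chainok k r s -> t < size s ->
  stepok k (nth dstep s t) (rankafter (drop t.+1 s) r).
Proof.
elim: s t => [|s0 s IH] [|t] //= /andP [H1 H2] Ht.
- by rewrite drop0.
- by apply: IH.
Qed.

Lemma botrk_rank (i : 'I_n) : rankafter (ss i) (botrk i) = trk rkG (rule i).2.
Proof.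
have [_ _ _ S] := rule_props i; move: S; rewrite /botrk /ss.
by case: (ch i) => s [B|g] /=; case.
Qed.

Lemma chainok_i (i : 'I_n) : chainok k (botrk i) (ss i).
Proof.
have [_ _ _ S] := rule_props i; move: S; rewrite /botrk /ss.
by case: (ch i) => s [B|g] /=; case.
Qed.

Lemma rk'_name (i : 'I_n) t : t <= m i -> rk' (name i t) = rankafter (drop t (ss i)) (botrk i).
Proof.
move=> Ht; rewrite /name; case: eqP => [->|t0].
  by rewrite /= drop0 botrk_rank; have [_ -> _ _] := rule_props i.
case: eqP => [Em|tm].
  rewrite /botrk; case E: (ch i).2 => [B|g] /=.
    by rewrite Em /m drop_size.
  by rewrite (inordE (i:=i)) // Em /botrk E.
by rewrite /= (inordE (i:=i)).
Qed.

Lemma hr_inv X r : List.In (X, r) hr -> exists i : 'I_n, List.In (X, r) (rules_i i).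
Proof. by case/List.in_flat_map => i [_ H]; exists i. Qed.

Lemma hr_in (i : 'I_n) X r : List.In (X, r) (rules_i i) -> List.In (X, r) hr.
Proof.
move=> H; apply/List.in_flat_map; exists i; split => //.
by apply: In_mem; rewrite mem_enum.
Qed.

Lemma rules_i_inv (i : 'I_n) X r : List.In (X, r) (rules_i i) ->
  (exists t, [/\ t < m i, X = name i t & r = HStep (nth dstep (ss i) t) (name i t.+1)]) \/
  (exists B, [/\ (ch i).2 = BNt B, m i = 0, X = inl (rule i).1 & r = HUnit (inl B)]) \/
  (exists g, [/\ (ch i).2 = BGr g, X = name i (m i) & r = HGround g]).
Proof.
move=> H0; case: (List.in_app_or _ _ _ H0).
  case/List.in_map_iff => t [[<- <-] Ht]; left; exists t; split => //.
  by move/List.in_seq: Ht => [_ /ltP].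
rewrite /final; case E: (ch i).2 => [B|g].
  case: eqP => // Em [] // [<- <-]; right; left; by exists B.
case=> // [[<- <-]]; right; right; by exists g.
Qed.

Lemma step_in (i : 'I_n) t : t < m i ->
  List.In (name i t, HStep (nth dstep (ss i) t) (name i t.+1)) hr.
Proof.
move=> Ht; apply: (hr_in (i:=i)); apply: List.in_or_app; left.
apply/List.in_map_iff; exists t; split => //; apply/List.in_seq; split; first lia.
by apply/ltP.
Qed.

Lemma wf_hr X r : List.In (X, r) hr -> hwf k rk' X r.
Proof.
case/hr_inv => i /rules_i_inv [[t [Ht -> ->]]|[[B [E Em -> ->]]|[g [E -> ->]]]] /=.
- rewrite !rk'_name //; try lia.
  rewrite (rankafter_drop _ Ht) eqxx andbT.
  exact: chainok_drop (chainok_i i) Ht.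
- have [_ R _ _] := rule_props i; rewrite R.
  rewrite -botrk_rank /botrk E.
  by have -> : ss i = [::] by apply: size0nil.
- have [_ _ _ S] := rule_props i.
  have H : (tlen g <= 1) && (trank g <= k).
    by move: S E; case: (ch i) => s0 [B|g0] //= [_ _ H _ _] [<-].
  rewrite rk'_name // /ss drop_size /= /botrk E eqxx /=.
  by case/andP: H => -> ->.
Qed.

Lemma S0rk : rk' (inl (start G)) = 0.
Proof. by case: kd. Qed.

Notation LHh := (LH hr).

Lemma LsemG_rank A x : Lsem G A x -> trank x = rkG A.
Proof.
elim => [{}A alpha Hin E|{}A alpha B {}x Hin E Ho _ IH].
  have [_ H] := kd; have [C R _] := H _ _ Hin.
  by rewrite R; exact: (rank_nu C E).
have [_ H] := kd; have [C R _] := H _ _ Hin.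
rewrite R; apply: (rank_nuv C) => B' HB'; by rewrite (occ_uniq E HB' Ho).
Qed.

Lemma down (i : 'I_n) t y : t <= m i -> LHh (name i (m i)) y ->
  LHh (name i t) (applyS (drop t (ss i)) y).
Proof.
move=> Ht H; move Ed : (m i - t) => d; elim: d t Ht Ed => [|d IH] t Ht Ed.
  have -> : t = m i by lia.
  by rewrite /m drop_size.
have Htm : t < m i by lia.
rewrite (applyS_drop _ Htm).
apply: LH_s (step_in Htm) _.
apply: IH; lia.
Qed.

Lemma rule_of (A : NT) alpha : List.In (A, alpha) (rules G) ->
  exists i : 'I_n, rule i = (A, alpha).
Proof.
case/(nth_of_In dflt) => i Hi E; exists (Ordinal Hi); exact: E.
Qed.

Lemma G_to_H A x : Lsem G A x -> LHh (inl A) x.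
Proof.
elim => [{}A alpha Hin E|{}A alpha B {}x Hin E Ho HB IH].
- have [i Ei] := rule_of Hin.
  have [_ _ _ S] := rule_props i.
  have N0 : name i 0 = inl A by rewrite /name Ei.
  move: S; rewrite Ei /= /ch Ei /=.
  case Ec: (chain alpha) => [s0 [B|g]] /=.
    by case=> HB _ _ _; have := occ_nnt HB; rewrite E.
  case=> _ Ev _ _ _.
  have Hg : List.In (name i (m i), HGround g) hr.
    apply: (hr_in (i:=i)); apply: List.in_or_app; right.
    by rewrite /final /ch Ei Ec; left.
  have := down (leq0n (m i)) (LH_g Hg).
  by rewrite N0 drop0 /ss /ch Ei Ec /= -Ev.
- have [i Ei] := rule_of Hin.
  have [_ _ _ S] := rule_props i.
  have N0 : name i 0 = inl A by rewrite /name Ei.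
  have Rx := LsemG_rank HB.
  move: S; rewrite Ei /= /ch Ei /=.
  case Ec: (chain alpha) => [s0 [B'|g]] /=; last by case; rewrite E.
  case=> HB' Ev _ _.
  have EB : B' = B by apply: (occ_uniq E HB' Ho).
  subst B'.
  rewrite Ev //.
  case: (posnP (size s0)) => Em.
    have Hu : List.In (inl A, HUnit (inl B)) hr.
      apply: (hr_in (i:=i)); apply: List.in_or_app; right.
      by rewrite /final /m /ss /ch Ei Ec /= Em /=; left.
    by rewrite (size0nil Em) /=; apply: LH_u Hu IH.
  have Nm : name i (m i) = inl B.
    rewrite /name /m /ss /ch Ei Ec /= eqxx; case: eqP => //; lia.
  have := down (leq0n (m i)) (eq_ind_r (fun X => LHh X x) IH Nm).
  by rewrite N0 drop0 /ss /ch Ei Ec.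
Qed.

Definition Q (i : 'I_n) (t : nat) (y : tup) : Prop :=
  match (ch i).2 with
  | BNt B => exists x, [/\ Lsem G B x, trank x = rkG B & y = applyS (drop t (ss i)) x]
  | BGr g => y = applyS (drop t (ss i)) g
  end.

Definition PP (X : NT') (y : tup) : Prop :=
  match X with
  | inl A => Lsem G A y
  | inr (i, t) => 0 < t <= m i -> Q i t y
  end.

Lemma Q0 (i : 'I_n) y : Q i 0 y -> Lsem G (rule i).1 y.
Proof.
have [C R N1 S] := rule_props i; have Hin := rule_in i.
rewrite /Q /ss drop0; move: S Hin C R N1; rewrite /ch.
case: (rule i) => A alpha /=.
case: (chain alpha) => s0 [B|g] /=.
- case=> HB Ev _ _ Hin C R N1 [x [Hx Rx ->]].
  have E1 : nnt alpha = 1 by have := occ_nnt HB; lia.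
  rewrite -Ev //; exact: Ls_step Hin E1 HB Hx.
- case=> E0 Ev _ _ _ Hin C R N1 ->; rewrite -Ev; exact: Ls_ground Hin E0.
Qed.

Lemma Q_name (i : 'I_n) t y : t <= m i -> 0 < t -> PP (name i t) y -> Q i t y.
Proof.
move=> Ht t0; rewrite /name; have -> : (t == 0) = false by lia.
case: eqP => [Em|tm].
  rewrite /Q; case E: (ch i).2 => [B|g] /=.
    move=> HB; exists y; split => //; first exact: LsemG_rank.
    by rewrite Em /m drop_size.
  by rewrite (inordE (i:=i)) // => H; have := H ltac:(lia); rewrite /Q E.
by rewrite /= (inordE (i:=i)) // => H; apply: H; lia.
Qed.

Lemma PP_name (i : 'I_n) t y : t <= m i ->
  (t = m i -> exists g, (ch i).2 = BGr g) -> Q i t y -> PP (name i t) y.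
Proof.
move=> Ht Hb HQ; rewrite /name; case: eqP => [t0|t0].
  by subst t; apply: Q0.
case: eqP => [Em|tm].
  have [g Eg] := Hb Em; rewrite Eg /= (inordE (i:=i)) // => _; exact: HQ.
by rewrite /= (inordE (i:=i)) // => _.
Qed.

Lemma Q_step (i : 'I_n) t x : t < m i -> Q i t.+1 x -> Q i t (stepf (nth dstep (ss i) t) x).
Proof.
move=> Ht; rewrite /Q; case: (ch i).2 => [B|g].
  by case=> x0 [H1 H2 ->]; exists x0; split => //; rewrite (applyS_drop _ Ht).
by move=> ->; rewrite (applyS_drop _ Ht).
Qed.

Lemma H_to_G X y : LHh X y -> PP X y.
Proof.
elim => [X0 g Hin|X0 Z x Hin _ IH|X0 s Z x Hin _ IH].
- case/hr_inv: Hin => i /rules_i_inv [[t [_ _ //]]|[[B [_ _ _ //]]|[g' [E -> Eq]]]]; case: Eq => Eq; subst g'.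
  apply: PP_name => //; first by move=> _; exists g.
  by rewrite /Q E /m drop_size.
- case/hr_inv: Hin => i /rules_i_inv [[t [_ _ //]]|[[B [E Em -> Eq]]|[g' [_ _ //]]]]; case: Eq => Eq; subst Z.
  apply: Q0; rewrite /Q E; exists x; split => //; first exact: LsemG_rank.
  by have -> : ss i = [::] by apply: size0nil.
- case/hr_inv: Hin => i /rules_i_inv [[t [Ht -> Eq]]|[[B [_ _ _ //]]|[g' [_ _ //]]]]; case: Eq => Es Ez; subst s Z.
  apply: PP_name; [lia | lia |].
  apply: Q_step => //; apply: Q_name => //.
Qed.

Lemma H_equiv w : Lsem G (start G) w <-> LHh (inl (start G)) w.
Proof. split; [exact: G_to_H | exact: H_to_G]. Qed.

End Build.


Unset Implicit Arguments.
Theorem lemma2 (Sigma : finType) (k : nat) (G : grammar Sigma) :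
  is_kdcfg k G -> linear_grammar G ->
  exists G' : grammar Sigma,
    is_kdcfg k G' /\
    (forall A alpha, List.In (A, alpha) (rules G') -> normal_rule G' A alpha) /\
    (forall w : tup Sigma, lang G w <-> lang G' w).
Proof.
move=> kd lin.
have wf := wf_hr kd lin.
have S0 := S0rk kd.
exists (G' (@rk' _ G) (inl (start G)) (hr G)).
split; first exact: G'_kdcfg wf S0.
split; first by move=> A alpha H; exact: (G'_normal wf H).
move=> w; rewrite /lang (lang_Lsem lin) (lang_Lsem (@G'_linear _ _ _ _ _)).
rewrite (H_equiv kd lin w).
exact: (iff_sym (G'_lang wf S0 w)).
Qed.
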